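(* Let $K$ be a field, $c\in K\setminus\{0\}$, $n\ge1$, let $f,g$ be $c$-friezes of order $n$ over $K$, and let $\Sigma\subseteq\mathbb{B}_n$ be a section. Suppose that $f(p)=g(p)$ for all $p\in\Sigma$ and that $f(p)\neq0$ for every $p=(i,j)\in\Sigma$ with $-1\le j-i\le n$ (i.e. every point of $\Sigma$ in rows $0,\dots,n+1$). Then $f=g$.
   Context: The $c$-continuant polynomials $P_k=P_k^c$ ($k\ge-1$) are defined by $P_{-1}=0$, $P_0=1$, and for $k\ge1$, $P_k(x_1,\dots,x_k)=x_kP_{k-1}(x_1,\dots,x_{k-1})+cP_{k-2}(x_1,\dots,x_{k-2})$. A family $(x_i)_{i\in\mathbb{Z}}$ in $K$ is $n$-admissible if $P_{n+2}(x_i,\dots,x_{i+n+1})=0$ for all $i$. Let $\mathbb{B}_n=\{(i,j)\in\mathbb{Z}^2:-2\le j-i\le n+1\}$; the point $(i,j)$ lies in row $j-i+1$ (rows $-1,\dots,n+2$). A $c$-frieze of order $n$ is a function $f:\mathbb{B}_n\to K$ for which there is an $n$-admissible family $(x_i)$ with $f(i,j)=P_{j-i+1}(x_i,\dots,x_j)$ for all $(i,j)\in\mathbb{B}_n$ (rows $-1$ and $n+2$ are identically $0$, row $0$ identically $1$). A section is a subset $\Sigma\subseteq\mathbb{B}_n$ with $|\Sigma|=n+4$ such that for every $(i_0,j_0)\in\Sigma$: (a) if $(i_0,j_0-1)$ and $(i_0+1,j_0)$ lie in $\mathbb{B}_n$, at least one of them is in $\Sigma$; (b) if $(i_0-1,j_0)$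 and $(i_0,j_0+1)$ lie in $\mathbb{B}_n$, at least one of them is in $\Sigma$. *)

(* Defs.v *)
From HB Require Import structures.
From mathcomp Require Import all_boot all_order all_algebra.
Set Implicit Arguments. Unset Strict Implicit. Unset Printing Implicit Defensive.
Import Order.TTheory GRing.Theory Num.Theory.
Local Open Scope ring_scope.

Section Continuants.
Variables (K : fieldType) (c : K).

(* cont_pair x k = (P_{k-1}(x_1..x_{k-1}), P_k(x_1..x_k)) where x_{t+1} := x t *)
Fixpoint cont_pair (x : nat -> K) (k : nat) : K * K :=
  match k with
  | 0%N => (0, 1)
  | k'.+1 => let: (a, b) := cont_pair x k' in (b, x k' * b + c * a)
  end.

Definition cont (s : seq K) : K := (cont_pair (fun t => nth 0 s t) (size s)).2.

Definition window (x : int -> K) (i : int) (m : nat) : seq K :=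
  [seq x (i + t%:Z) | t <- iota 0 m].

(* P_{j-i+1}(x_i, ..., x_j), with P_{-1} = 0 (and 0 for any negative index) *)
Definition fval (x : int -> K) (i j : int) : K :=
  match (j - i + 1)%R with
  | Posz m => cont (window x i m)
  | Negz _ => 0
  end.

Definition admissible (n : nat) (x : int -> K) : Prop :=
  forall i : int, cont (window x i n.+2) = 0.

End Continuants.

Definition inB (n : nat) (p : int * int) : bool :=
  ((-2 : int) <= p.2 - p.1) && (p.2 - p.1 <= n%:Z + 1).

(* c-frieze of order n: a function on B_n (values outside B_n are irrelevant) *)
Definition is_frieze (K : fieldType) (c : K) (n : nat) (f : int * int -> K) : Prop :=
  exists x : int -> K, admissible c n x /\
    forall p, inB n p -> f p = fval c x p.1 p.2.

Definition is_section (n : nat) (S : seq (int * int)) : Prop :=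
  [/\ uniq S, size S = (n + 4)%N, (forall p, p \in S -> inB n p) &
    forall i0 j0 : int, (i0, j0) \in S ->
      (inB n (i0, j0 - 1) -> inB n (i0 + 1, j0) ->
         ((i0, j0 - 1) \in S) || ((i0 + 1, j0) \in S)) /\
      (inB n (i0 - 1, j0) -> inB n (i0, j0 + 1) ->
         ((i0 - 1, j0) \in S) || ((i0, j0 + 1) \in S))].

(* Main.v *)
Require Import Defs.
From HB Require Import structures.
From mathcomp Require Import all_boot all_order all_algebra.
From mathcomp Require Import zify ring.
Import Order.TTheory GRing.Theory Num.Theory.
Local Open Scope ring_scope.
Set Implicit Arguments. Unset Strict Implicit. Unset Printing Implicit Defensive.

Section Nat.
Variables (K : fieldType) (c : K).

Definition Qn (y : nat -> K) m := (cont_pair c y m).1.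
Definition sh (y : nat -> K) (k : nat) := fun u => y (k + u)%N.

Lemma cpS1 y m : (cont_pair c y m.+1).1 = (cont_pair c y m).2.
Proof. by rewrite /=; case: cont_pair. Qed.
Lemma cpS2 y m : (cont_pair c y m.+1).2 = y m * (cont_pair c y m).2 + c * (cont_pair c y m).1.
Proof. by rewrite /=; case: cont_pair. Qed.
Lemma Qn0 y : Qn y 0 = 0. Proof. by []. Qed.
Lemma Qn1 y : Qn y 1 = 1. Proof. by []. Qed.
Lemma QnSS y m : Qn y m.+2 = y m * Qn y m.+1 + c * Qn y m.
Proof. by rewrite /Qn cpS1 cpS2 cpS1. Qed.
Lemma Qn2 y : Qn y 2 = y 0%N.
Proof. by rewrite QnSS Qn1 Qn0 mulr1 mulr0 addr0. Qed.

Lemma cp_ext y z m : (forall t, (t < m)%N -> y t = z t) -> cont_pair c y m = cont_pair c z m.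
Proof.
elim: m => [|m IH] h //=.
rewrite IH; last by move=> t ht; apply: h; apply: ltnW.
by rewrite h.
Qed.

Lemma Qn_ext y z m : (forall t, (t.+1 < m)%N -> y t = z t) -> Qn y m = Qn z m.
Proof.
case: m => [|m] h //.
by rewrite /Qn !cpS1 (cp_ext (z:=z)).
Qed.

Lemma diamond y a : Qn y a.+1 * Qn (sh y 1) a.+1 - Qn y a.+2 * Qn (sh y 1) a = (-c)^+a.
Proof.
elim: a => [|a IH]; first by rewrite !Qn1 Qn0 mulr0 subr0 mulr1 expr0.
rewrite (QnSS y a.+1) (QnSS (sh y 1) a) exprS -IH /sh /= add1n. ring.
Qed.

Lemma ptolemyL y a t : Qn y a.+1 * Qn (sh y 1) (a+t) - Qn y (a+t).+1 * Qn (sh y 1) a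
  = (-c)^+a * Qn (sh y a.+1) t.
Proof.
suff : forall t, (Qn y a.+1 * Qn (sh y 1) (a+t) - Qn y (a+t).+1 * Qn (sh y 1) a
  = (-c)^+a * Qn (sh y a.+1) t) /\ (Qn y a.+1 * Qn (sh y 1) (a+t.+1) - Qn y (a+t.+1).+1 * Qn (sh y 1) a
  = (-c)^+a * Qn (sh y a.+1) t.+1) by move=> /(_ t) [].
clear t; elim=> [|t [IH1 IH2]].
  split; first by rewrite addn0 subrr Qn0 mulr0.
  by rewrite addn1 diamond Qn1 mulr1.
split => //.
rewrite !addnS (QnSS (sh y 1)) (QnSS y) (QnSS (sh y a.+1)).
rewrite !addnS in IH2.
rewrite /sh add1n addSn.
rewrite -/(sh y 1) -/(sh y a.+1).
transitivity (y (a+t).+1 * (Qn y a.+1 * Qn (sh y 1) (a + t).+1 - Qn y (a + t).+2 * Qn (sh y 1) a)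
  + c * (Qn y a.+1 * Qn (sh y 1) (a + t) - Qn y (a + t).+1 * Qn (sh y 1) a)); first by ring.
rewrite IH1 IH2; ring.
Qed.

Lemma ptolemyR y u d : Qn (sh y u) d.+1 * Qn y (u+d) - Qn y (u+d).+1 * Qn (sh y u) d
  = (-c)^+d * Qn y u.
Proof.
elim: d => [|d IH]; first by rewrite Qn1 Qn0 addn0; ring.
rewrite (QnSS (sh y u)) !addnS (QnSS y) exprS -mulrA -IH /sh. ring.
Qed.

End Nat.

Section Int.
Variables (K : fieldType) (c : K).

Definition Q (x : int -> K) (s : int) m := Qn c (fun t : nat => x (s + t%:Z)) m.

Lemma cont_window x k m : cont c (window x k m) = Q x k m.+1.
Proof.
rewrite /cont /Q /Qn cpS1 /window size_map size_iota; congr (_.2).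
apply: cp_ext => t ht.
by rewrite (nth_map 0%N) ?size_iota // nth_iota // add0n.
Qed.

Lemma fvalQ x i j m : j = i + m%:Z - 2 -> fval c x i j = Q x i m.
Proof.
move=> ->; rewrite /fval; case: m => [|m].
  by rewrite (_ : i + 0%:Z - 2 - i + 1 = -1) //; lia.
by rewrite (_ : i + m.+1%:Z - 2 - i + 1 = Posz m) ?cont_window //; lia.
Qed.

Lemma Q_shift x s k m : Q x (s + k%:Z) m = Qn c (sh (fun t : nat => x (s + t%:Z)) k) m.
Proof. by apply: Qn_ext => t _; rewrite /sh; congr x; lia. Qed.

Lemma fval_diag x z : fval c x z z = x z.
Proof. by rewrite (@fvalQ x z z 2) ?/Q ?Qn2 ?addr0 //; lia. Qed.

Lemma ptolL' x i j l (a t : nat) : l - i + 2 = a%:Z -> j - l = t%:Z ->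
  fval c x (i-1) l * fval c x i j - fval c x (i-1) j * fval c x i l
  = (-c)^+a * fval c x (l+2) j.
Proof.
move=> ea et.
rewrite (@fvalQ x (i-1) l a.+1); last lia.
rewrite (@fvalQ x i j (a+t)); last lia.
rewrite (@fvalQ x (i-1) j (a+t).+1); last lia.
rewrite (@fvalQ x i l a); last lia.
rewrite (@fvalQ x (l+2) j t); last lia.
have Ei m : Q x i m = Qn c (sh (fun t : nat => x (i - 1 + t%:Z)) 1) m.
  by rewrite -Q_shift; congr (Q x _ _); lia.
have El m : Q x (l+2) m = Qn c (sh (fun t : nat => x (i - 1 + t%:Z)) a.+1) m.
  by rewrite -Q_shift; congr (Q x _ _); lia.
by rewrite !Ei El; apply: ptolemyL.
Qed.

Lemma ptolR' x i j l (u d : nat) : l - i = u%:Z -> j + 2 - l = d%:Z ->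
  fval c x l (j+1) * fval c x i j - fval c x i (j+1) * fval c x l j
  = (-c)^+d * fval c x i (l-2).
Proof.
move=> eu ed.
rewrite (@fvalQ x l (j+1) d.+1); last lia.
rewrite (@fvalQ x i j (u+d)); last lia.
rewrite (@fvalQ x i (j+1) (u+d).+1); last lia.
rewrite (@fvalQ x l j d); last lia.
rewrite (@fvalQ x i (l-2) u); last lia.
have El m : Q x l m = Qn c (sh (fun t : nat => x (i + t%:Z)) u) m.
  by rewrite -Q_shift; congr (Q x _ _); lia.
by rewrite !El; apply: ptolemyR.
Qed.

Variable n : nat.
Hypothesis c0 : c != 0.

Lemma Qrow x k : admissible c n x -> Q x k n.+3 = 0.
Proof. by move=> ax; rewrite -cont_window; apply: ax. Qed.

Lemma Qnz x k : admissible c n x -> Q x k n.+2 != 0.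
Proof.
move=> ax.
have := ptolemyL c (fun t : nat => x (k + t%:Z)) n.+1 1.
rewrite addn1 Qn1 mulr1.
have -> : Qn c (fun t : nat => x (k + t%:Z)) n.+3 = 0 by apply: (Qrow k ax).
rewrite mul0r subr0 => E.
have : (-c)^+n.+1 != 0 by rewrite expf_neq0 // oppr_eq0.
by rewrite -E mulf_eq0 negb_or => /andP[].
Qed.

Lemma fwd x y k : admissible c n x -> admissible c n y ->
  (forall t : nat, (t <= n)%N -> x (k + t%:Z) = y (k + t%:Z)) ->
  x (k + n.+1%:Z) = y (k + n.+1%:Z).
Proof.
move=> ax ay H.
have zx := Qrow k ax; have zy := Qrow k ay; have nz := Qnz k ax.
rewrite /Q QnSS in zx; rewrite /Q QnSS in zy; rewrite /Q in nz.
have e2 : Qn c (fun t : nat => x (k + t%:Z)) n.+2 = Qn c (fun t : nat => y (k + t%:Z)) n.+2.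
  by apply: Qn_ext => t ht; apply: H.
have e1 : Qn c (fun t : nat => x (k + t%:Z)) n.+1 = Qn c (fun t : nat => y (k + t%:Z)) n.+1.
  by apply: Qn_ext => t ht; apply: H; apply: ltnW.
apply: (mulIf nz); apply: (addIr (c * Qn c (fun t : nat => x (k + t%:Z)) n.+1)).
by rewrite zx [in RHS]e2 [in RHS]e1 zy.
Qed.

Lemma bwd x y k : admissible c n x -> admissible c n y ->
  (forall t : nat, (t <= n)%N -> x (k + 1 + t%:Z) = y (k + 1 + t%:Z)) ->
  x k = y k.
Proof.
move=> ax ay H.
have Lx := ptolemyL c (fun t : nat => x (k + t%:Z)) 1 n.+1.
have Ly := ptolemyL c (fun t : nat => y (k + t%:Z)) 1 n.+1.
rewrite add1n Qn2 Qn1 mulr1 addr0 in Lx.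
rewrite add1n Qn2 Qn1 mulr1 addr0 in Ly.
rewrite (_ : Qn c (fun t : nat => x (k + t%:Z)) n.+3 = 0) in Lx; last by apply: (Qrow k ax).
rewrite (_ : Qn c (fun t : nat => y (k + t%:Z)) n.+3 = 0) in Ly; last by apply: (Qrow k ay).
have nz := Qnz (k + 1%:Z) ax; rewrite Q_shift in nz.
have e2 : Qn c (sh (fun t : nat => x (k + t%:Z)) 1) n.+2 = Qn c (sh (fun t : nat => y (k + t%:Z)) 1) n.+2.
  apply: Qn_ext => t ht; rewrite /sh.
  have := H t ht; rewrite (_ : k + 1 + t%:Z = k + (1 + t)%N%:Z) //; lia.
have e1 : Qn c (sh (fun t : nat => x (k + t%:Z)) 2) n.+1 = Qn c (sh (fun t : nat => y (k + t%:Z)) 2) n.+1.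
  apply: Qn_ext => t ht; rewrite /sh.
  have := H t.+1 ht; rewrite (_ : k + 1 + t.+1%:Z = k + (2 + t)%N%:Z) //; lia.
rewrite ?mul0r ?mulr1 subr0 in Lx; rewrite ?mul0r ?mulr1 subr0 in Ly.
apply: (mulIf nz).
by rewrite Lx [in RHS]e2 Ly e1.
Qed.

End Int.

From Stdlib Require Import FunctionalExtensionality.

Lemma int_nat (z : int) : 0 <= z -> exists m : nat, z = m%:Z.
Proof. by case: z => // m _; exists m. Qed.

Theorem mainTheorem4 (K : fieldType) (c : K) (n : nat)
  (f g : int * int -> K) (S : seq (int * int)) :
  c != 0 -> (1 <= n)%N ->
  is_frieze c n f -> is_frieze c n g -> is_section n S ->
  (forall p, p \in S -> f p = g p) ->
  (forall p, p \in S -> (-1 : int) <= p.2 - p.1 -> p.2 - p.1 <= n%:Z -> f p != 0) ->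
  forall p, inB n p -> f p = g p.
Proof.
move=> c0 n1 [x [ax fx]] [y [ay gy]] [uS sizeS inBS secS] agree nz.
have fS p : p \in S -> f p = fval c x p.1 p.2 by move=> hp; apply: fx; apply: inBS.
have gS p : p \in S -> g p = fval c y p.1 p.2 by move=> hp; apply: gy; apply: inBS.
have eqS i j : (i, j) \in S -> fval c x i j = fval c y i j.
  by move=> hp; rewrite -(fS (i,j)) // -(gS (i,j)) // agree.
have triv a b : b - a <= -1 -> -2 <= b - a -> fval c x a b = fval c y a b.
  move=> h1 h2.
  have [->|->] : b = a + 0%:Z - 2 \/ b = a + 1%:Z - 2 by lia.
    by rewrite !(fvalQ _ _ (erefl _)).
  by rewrite !(fvalQ _ _ (erefl _)).
have inBP i j : inB n (i, j) = ((-2 : int) <= j - i) && (j - i <= n%:Z + 1) by [].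
have down : forall N : nat, forall i j, (i, j) \in S -> -1 <= j - i -> j - i <= N%:Z - 1 ->
    exists i' j', (i', j') \in S /\ j' - i' = -1.
  elim=> [|N IH] i j pS h1 h2.
    by exists i, j; split => //; lia.
  case: (eqVneq (j - i) (-1)) => [E|E]; first by exists i, j.
  have := inBS _ pS; rewrite inBP => /andP[b1 b2].
  have [] := secS i j pS => + _.
  rewrite !inBP => /(_ _ _) /orP [].
  - by apply/andP; split; lia.
  - by apply/andP; split; lia.
  - by move=> pS'; apply: (IH _ _ pS'); lia.
  - by move=> pS'; apply: (IH _ _ pS'); lia.
have [i0 [j0 [p0S hp0]]] : exists i j, (i, j) \in S /\ j - i = -1.
  have qS : nth ((0, 0) : int * int) S 0%N \in S.
    by apply: mem_nth; rewrite sizeS; lia.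
  move: qS; case: (nth _ S 0%N) => i j qS.
  have := inBS _ qS; rewrite inBP => /andP[b1 b2].
  case: (eqVneq (j - i) (-2)) => [E|E].
    have [_] := secS i j qS.
    rewrite !inBP => /(_ _ _) /orP [].
    - by apply/andP; split; lia.
    - by apply/andP; split; lia.
    - by move=> pS'; exists (i - 1), j; split => //; lia.
    - by move=> pS'; exists i, (j + 1); split => //; lia.
  by apply: (down n.+3 i j qS); lia.
have up : forall k : nat, (k <= n.+2)%N -> exists i j, (i, j) \in S /\ j - i = k%:Z - 1 /\
    forall a b, i <= a -> b <= j -> -2 <= b - a -> fval c x a b = fval c y a b.
  elim=> [|k IH] hk.
    exists i0, j0; split => //; split; first by lia.
    by move=> a b h1 h2 h3; apply: triv; lia.
  have [i [j [pS [hr R]]]] := IH (ltnW hk).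
  have nzx : fval c x i j != 0.
    by rewrite -(fS (i,j)) //; apply: nz => //=; lia.
  have eqij := eqS i j pS.
  have [_] := secS i j pS.
  rewrite !inBP => /(_ _ _) /orP [].
  - by apply/andP; split; lia.
  - by apply/andP; split; lia.
  - move=> pS'; exists (i - 1), j; split => //; split; first by lia.
    move=> a b h1 h2 h3.
    case: (lerP i a) => ha; first by apply: R.
    case: (eqVneq (b - a) (-2)) => hb; first by apply: triv; lia.
    have -> : a = i - 1 by lia.
    have [A EA] : exists A : nat, b - i + 2 = A%:Z by apply: int_nat; lia.
    have [T ET] : exists T : nat, j - b = T%:Z by apply: int_nat; lia.
    have Lx := ptolL' c x EA ET; have Ly := ptolL' c y EA ET.
    have e1 : fval c x i b = fval c y i b by apply: R; lia.
    have e2 : fval c x (b + 2) j = fval c y (b + 2) j by apply: R; lia.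
    have e3 := eqS _ _ pS'.
    rewrite -e1 -e2 -e3 -eqij in Ly.
    apply: (mulIf nzx); apply: (addIr (- (fval c x (i - 1) j * fval c x i b))).
    by rewrite Lx Ly.
  - move=> pS'; exists i, (j + 1); split => //; split; first by lia.
    move=> a b h1 h2 h3.
    case: (lerP b j) => hb; first by apply: R.
    have -> : b = j + 1 by lia.
    case: (eqVneq (j + 1 - a) (-2)) => ha; first by apply: triv; lia.
    have [U EU] : exists U : nat, a - i = U%:Z by apply: int_nat; lia.
    have [D ED] : exists D : nat, j + 2 - a = D%:Z by apply: int_nat; lia.
    have Lx := ptolR' c x EU ED; have Ly := ptolR' c y EU ED.
    have e1 : fval c x a j = fval c y a j by apply: R; lia.
    have e2 : fval c x i (a - 2) = fval c y i (a - 2) by apply: R; lia.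
    have e3 := eqS _ _ pS'.
    rewrite -e1 -e2 -e3 -eqij in Ly.
    apply: (mulIf nzx); apply: (addIr (- (fval c x i (j + 1) * fval c x a j))).
    by rewrite Lx Ly.
have [a0 [b0 [_ [hr R]]]] := up n.+2 (leqnn _).
have xyc z z' : z = z' -> x z = y z -> x z' = y z' by move=> ->.
have base t : (t <= n.+1)%N -> x (a0 + t%:Z) = y (a0 + t%:Z).
  move=> ht; rewrite -(fval_diag c x) -(fval_diag c y); apply: R; lia.
have fw : forall N t : nat, (t <= n)%N -> x (a0 + N%:Z + t%:Z) = y (a0 + N%:Z + t%:Z).
  elim=> [|N IH] t ht.
    by apply: (xyc (a0 + t%:Z)); [lia | apply: base; lia].
  case: (ltnP t n) => htn.
    by apply: (xyc (a0 + N%:Z + t.+1%:Z)); [lia | apply: IH].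
  apply: (xyc (a0 + N%:Z + n.+1%:Z)); first by lia.
  exact: (fwd c0 ax ay IH).
have bw : forall N t : nat, (t <= n)%N -> x (a0 - N%:Z + t%:Z) = y (a0 - N%:Z + t%:Z).
  elim=> [|N IH] t ht.
    by apply: (xyc (a0 + t%:Z)); [lia | apply: base; lia].
  case: t ht => [|t] ht.
    apply: (xyc (a0 - N.+1%:Z)); first by lia.
    apply: (bwd c0 ax ay) => t ht'.
    by apply: (xyc (a0 - N%:Z + t%:Z)); [lia | apply: IH].
  by apply: (xyc (a0 - N%:Z + t%:Z)); [lia | apply: IH; apply: ltnW].
have exy : x = y.
  apply: functional_extensionality => z.
  case: (lerP a0 z) => hz.
    have [N EN] : exists N : nat, z - a0 = N%:Z by apply: int_nat; lia.
    by apply: (xyc (a0 + N%:Z + 0%:Z)); [lia | apply: fw].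
  have [N EN] : exists N : nat, a0 - z = N%:Z by apply: int_nat; lia.
  by apply: (xyc (a0 - N%:Z + 0%:Z)); [lia | apply: bw].
by move=> p hp; rewrite fx // gy // exy.
Qed.
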